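(* Let $R$ be a finite set of attributes. Consider formal expressions (dependencies) of the form $X \rightarrow Y$ with $X, Y \subseteq R$, where juxtaposition of attribute sets denotes union (e.g. $XZ = X \cup Z$). Consider the following two systems of inference rules on such expressions. System O: (O1) Identity: for all $X \subseteq R$, infer $X \rightarrow X$. (O2) Decomposition: from $X \rightarrow Y$ and $Z \subseteq Y$, infer $X \rightarrow Z$. (O3) Composition: from $X \rightarrow Y$ and $Z \rightarrow W$, infer $XZ \rightarrow YW$. System N: (N1) Reflexivity: for all $Y \subseteq X \subseteq R$, infer $X \rightarrow Y$. (N2) Append: from $X \rightarrow Y$ and $Z \subseteq W$, infer $XW \rightarrow YZ$. (N3) Union: from $X \rightarrow Y$ and $X \rightarrow Z$, infer $X \rightarrow YZ$. (N4) Simplification: from $X \rightarrow YZ$, infer $X \rightarrow Y$ and $X \rightarrow Z$. Then the two systems are equivalent: every rule of System O is derivable using the rules of System N, and every rule of System N is derivable using the rules of System O. Consequently, for every set $\Sigma$ of such expressions and every expression $X \rightarrow Y$, $X \rightarrow Y$ is derivable from $\Sigma$ using System O if and only if it is derivable from $\Sigma$ using System N.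
   Context: System O is the axiom system the paper gives for Ontology Functional Dependencies (OFDs); System N is the axiom system for Null Functional Dependencies (NFDs), i.e. functional dependencies over relations with nulls. The statement concerns only syntactic derivability with these rules; $X, Y, Z, W$ range over subsets of $R$. *)

(* Defs.v *)
(* Attributes: a finite type A; the attribute set R is the
   whole of A, so subsets of R are elements of {set A}. *)
From mathcomp Require Import all_boot.
Set Implicit Arguments. Unset Strict Implicit. Unset Printing Implicit Defensive.

Definition dep (A : finType) := ({set A} * {set A})%type.

Inductive derO (A : finType) (Sigma : dep A -> Prop) : {set A} -> {set A} -> Prop :=
| O_hyp (X Y : {set A}) : Sigma (X, Y) -> derO Sigma X Y
| O1_identity (X : {set A}) : derO Sigma X X
| O2_decomposition (X Y Z : {set A}) : derO Sigma X Y -> Z \subset Y -> derO Sigma X Z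
| O3_composition (X Y Z W : {set A}) :
    derO Sigma X Y -> derO Sigma Z W -> derO Sigma (X :|: Z) (Y :|: W).

Inductive derN (A : finType) (Sigma : dep A -> Prop) : {set A} -> {set A} -> Prop :=
| N_hyp (X Y : {set A}) : Sigma (X, Y) -> derN Sigma X Y
| N1_reflexivity (X Y : {set A}) : Y \subset X -> derN Sigma X Y
| N2_append (X Y Z W : {set A}) : derN Sigma X Y -> Z \subset W -> derN Sigma (X :|: W) (Y :|: Z)
| N3_union (X Y Z : {set A}) : derN Sigma X Y -> derN Sigma X Z -> derN Sigma X (Y :|: Z)
| N4_simpl_l (X Y Z : {set A}) : derN Sigma X (Y :|: Z) -> derN Sigma X Y
| N4_simpl_r (X Y Z : {set A}) : derN Sigma X (Y :|: Z) -> derN Sigma X Z.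

(* Premise sets of rules: no premise, one premise, two premises. *)
Definition prem0 (A : finType) : dep A -> Prop := fun _ => False.
Definition prem1 (A : finType) (X Y : {set A}) : dep A -> Prop :=
  fun d => d = (X, Y).
Definition prem2 (A : finType) (X Y Z W : {set A}) : dep A -> Prop :=
  fun d => d = (X, Y) \/ d = (Z, W).

(* Main.v *)
Require Import Defs.
From mathcomp Require Import all_boot.

Section S.
Variable A : finType.
Implicit Types (X Y Z W : {set A}).

Lemma N_O1 S X : derN S X X.
Proof. by apply: N1_reflexivity. Qed.

Lemma N_O2 S X Y Z : derN S X Y -> Z \subset Y -> derN S X Z.
Proof.
move=> h sZY; have e : Y = Z :|: Y by apply/esym/setUidPr.
by rewrite e in h; apply: N4_simpl_l h.
Qed.

Lemma N_O3 S X Y Z W : derN S X Y -> derN S Z W -> derN S (X :|: Z) (Y :|: W).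
Proof.
move=> h1 h2.
have a := N2_append h1 (sub0set Z). rewrite setU0 in a.
have b := N2_append h2 (sub0set X). rewrite setU0 setUC in b.
exact: N3_union a b.
Qed.

Lemma O_N1 S X Y : Y \subset X -> derO S X Y.
Proof. by move=> h; apply: O2_decomposition h; exact: O1_identity. Qed.

Lemma O_N2 S X Y Z W : derO S X Y -> Z \subset W -> derO S (X :|: W) (Y :|: Z).
Proof. by move=> h s; apply: O3_composition h _; exact: O_N1. Qed.

Lemma O_N3 S X Y Z : derO S X Y -> derO S X Z -> derO S X (Y :|: Z).
Proof. by move=> h1 h2; have := O3_composition h1 h2; rewrite setUid. Qed.

Lemma O_N4l S X Y Z : derO S X (Y :|: Z) -> derO S X Y.
Proof. by move=> h; apply: O2_decomposition h (subsetUl _ _). Qed.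

Lemma O_N4r S X Y Z : derO S X (Y :|: Z) -> derO S X Z.
Proof. by move=> h; apply: O2_decomposition h (subsetUr _ _). Qed.
End S.

Theorem theorem3p6 (A : finType) :
  (* every rule of System O is derivable in System N *)
  ((forall X : {set A}, derN (@prem0 A) X X) /\
   (forall X Y Z : {set A}, Z \subset Y -> derN (prem1 X Y) X Z) /\
   (forall X Y Z W : {set A}, derN (prem2 X Y Z W) (X :|: Z) (Y :|: W))) /\
  (* every rule of System N is derivable in System O *)
  ((forall X Y : {set A}, Y \subset X -> derO (@prem0 A) X Y) /\
   (forall X Y Z W : {set A}, Z \subset W -> derO (prem1 X Y) (X :|: W) (Y :|: Z)) /\
   (forall X Y Z : {set A}, derO (prem2 X Y X Z) X (Y :|: Z)) /\
   (forall X Y Z : {set A}, derO (prem1 X (Y :|: Z)) X Y /\ derO (prem1 X (Y :|: Z)) X Z)) /\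
  (* consequence: same derivable dependencies from any Sigma *)
  (forall (Sigma : dep A -> Prop) (X Y : {set A}), derO Sigma X Y <-> derN Sigma X Y).
Proof.
split; [split; [|split]|split; [split; [|split; [|split]]|]].
- by move=> X; apply: N_O1.
- by move=> X Y Z s; apply: N_O2 s; apply: N_hyp.
- by move=> X Y Z W; apply: N_O3; apply: N_hyp; [left|right].
- by move=> X Y s; apply: O_N1.
- by move=> X Y Z W s; apply: O_N2 s; apply: O_hyp.
- by move=> X Y Z; apply: O_N3; apply: O_hyp; [left|right].
- by move=> X Y Z; split; [apply: O_N4l|apply: O_N4r]; apply: O_hyp.
- move=> S X Y; split.
  + elim=> {X Y} [X Y h|X|X Y Z _ ih s|X Y Z W _ ih1 _ ih2].
    * exact: N_hyp. * exact: N_O1. * exact: N_O2 ih s. * exact: N_O3.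
  + elim=> {X Y} [X Y h|X Y s|X Y Z W _ ih s|X Y Z _ ih1 _ ih2|X Y Z _ ih|X Y Z _ ih].
    * exact: O_hyp. * exact: O_N1. * exact: O_N2 ih s. * exact: O_N3.
    * exact: O_N4l ih. * exact: O_N4r ih.
Qed.
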